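(* For every odd prime $p$, the graph $ER'(p)$ satisfies $\chi(ER'(p))\ge 4$.
   Context: $\chi$ denotes the chromatic number. Let $p$ be an odd prime and $m=(p-1)/2$. Let $V(ER'(p))$ be the set of nonzero integer vectors $x=(x_1,x_2,x_3)\in\{-m,\dots,-1,0,1,\dots,m\}^3$ whose first nonzero entry equals $1$ (equivalently: take the representatives $[0,0,1]$, $[0,1,a]$, $[1,a,b]$, $a,b\in\{0,\dots,p-1\}$, of the one-dimensional subspaces of $\mathbb{F}_p^3$, and replace every entry $x_i>m$ by $x_i-p$). The graph $ER'(p)$ has this vertex set, with two vertices adjacent iff they are orthogonal as vectors of $\mathbb{R}^3$ under the standard inner product. (For $p=3$, $ER'(3)$ is the 13-vertex orthogonality graph $G_{13}$ of the vectors in $\{0,\pm1\}^3$ with first nonzero entry $1$.) *)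

(* Defs.v *)
From mathcomp Require Import all_boot all_order all_algebra.
Set Implicit Arguments. Unset Strict Implicit. Unset Printing Implicit Defensive.
Import Order.TTheory GRing.Theory Num.Theory.
Local Open Scope ring_scope.

Definition vec3 := (int * int * int)%type.

Definition mhalf (p : nat) : nat := (p.-1)./2.

Definition in_range (p : nat) (z : int) : bool :=
  (- (mhalf p)%:Z <= z) && (z <= (mhalf p)%:Z).

(* first nonzero entry equals 1 (this also forces x <> 0) *)
Definition first_nonzero_is_one (x : vec3) : bool :=
  let: (a, b, c) := x in
  if a != 0 then a == 1 else if b != 0 then b == 1 else c == 1.

Definition ER_vertex (p : nat) (x : vec3) : bool :=
  let: (a, b, c) := x in
  [&& in_range p a, in_range p b, in_range p c & first_nonzero_is_one x].

Definition dot3 (x y : vec3) : int :=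
  let: (a, b, c) := x in let: (a', b', c') := y in a * a' + b * b' + c * c'.

Definition ER_adj (p : nat) (x y : vec3) : bool :=
  [&& ER_vertex p x, ER_vertex p y & dot3 x y == 0].

Definition proper_coloring (T : Type) (V : T -> bool) (E : T -> T -> bool)
  (k : nat) (f : T -> nat) : Prop :=
  (forall x, V x -> (f x < k)%N) /\ (forall x y, E x y -> f x <> f y).

Definition colorable (T : Type) (V : T -> bool) (E : T -> T -> bool) (k : nat) : Prop :=
  exists f : T -> nat, proper_coloring V E k f.

(* Main.v *)
Require Import Defs.
From mathcomp Require Import all_boot all_order all_algebra.
From mathcomp Require Import zify.
Import Order.TTheory GRing.Theory Num.Theory.

Definition vs : seq vec3 := [:: (0,0,1); (0,1,-1); (0,1,0); (0,1,1); (1,-1,-1); (1,-1,0); (1,-1,1); (1,0,-1); (1,0,0); (1,0,1); (1,1,-1); (1,1,0); (1,1,1)]%R.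

Definition es : seq (nat * nat) := [:: (0, 2); (1, 3); (1, 4); (0, 5); (3, 6); (2, 7); (6, 7); (0, 8); (1, 8); (2, 8); (3, 8); (2, 9); (4, 9); (7, 9); (3, 10); (5, 10); (9, 10); (0, 11); (4, 11); (5, 11); (6, 11); (1, 12); (5, 12); (7, 12)].

Definition good (c : seq nat) := all (fun e => nth 0 c e.1 != nth 0 c e.2) es.

Definition pgood (c : seq nat) :=
  all (fun e => (e.2 < size c) ==> (e.1 < e.2) && (nth 0 c e.1 != nth 0 c e.2)) es.

Definition step (t : seq nat) := [seq rcons t x | x <- iota 0 3 & pgood (rcons t x)].
Arguments step : simpl never.

Fixpoint gen (n : nat) : seq (seq nat) :=
  if n is n'.+1 then flatten [seq step t | t <- gen n']
  else [:: [::]].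

Lemma gen13 : gen 13 = [::].
Proof. by vm_compute. Qed.

Lemma pgood_rcons t x : pgood (rcons t x) -> pgood t.
Proof.
move/allP=> H; apply/allP => e ein; apply/implyP => lt.
have := H e ein; rewrite size_rcons ltnS (ltnW lt) /= => /andP [h1 h2].
rewrite h1 /=; move: h2; by rewrite !(@nth_rcons nat) lt (ltn_trans h1 lt).
Qed.

Lemma gen_sound c : all (fun x => x < 3) c -> pgood c -> c \in gen (size c).
Proof.
elim/last_ind: c => [|t x IH] //.
rewrite all_rcons size_rcons => /andP [hx ht] hg /=.
apply/flatten_mapP; exists t.
  by apply: IH => //; apply: pgood_rcons hg.
rewrite /step; apply/mapP; exists x => //; by rewrite mem_filter hg mem_iota.
Qed.

Lemma no_good (c : seq nat) : size c = 13 -> all (fun x => x < 3) c -> ~~ good c.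
Proof.
move=> hs h3; apply/negP => hg.
have : pgood c.
  apply/allP => e ein; apply/implyP => _; apply/andP; split.
    have hl : all (fun e => e.1 < e.2) es by [].
    by move/allP: hl => /(_ e ein).
  by move/allP: hg => /(_ e ein).
move/(@gen_sound c h3); by rewrite hs gen13.
Qed.

Lemma in_range_small (p : nat) (z : int) : (1 <= mhalf p)%N -> (-1 <= z <= 1)%R -> in_range p z.
Proof. rewrite /in_range => hm /andP [h1 h2]; apply/andP; split; lia. Qed.

Lemma vs_vertex (p : nat) : (1 <= mhalf p)%N -> all (ER_vertex p) vs.
Proof.
move=> hm; have K z := @in_range_small p z hm.
by rewrite /= !K.
Qed.

Theorem mainTheorem5 (p : nat) (hp : prime p) (hodd : odd p) :
  forall k : nat, colorable (ER_vertex p) (ER_adj p) k -> (4 <= k)%N.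
Proof.
have p3 : (3 <= p)%N.
  have := prime_gt1 hp; case: p hp hodd => [|[|[|]]] //.
have hm : (1 <= mhalf p)%N by rewrite /mhalf; case: p p3 {hp hodd} => [|[|[|p]]].
have hv := @vs_vertex p hm.
move=> k [f [Hk Hadj]].
rewrite leqNgt; apply/negP => k3.
have c3 : all (fun x => x < 3) (map f vs).
  apply/allP => x /mapP [v vin ->]; apply: leq_trans (Hk v _) _.
    by move/allP: hv; apply.
  by rewrite -ltnS.
have := @no_good (map f vs) (size_map f vs) c3.
rewrite /good; move/allPn => [[i j] ein /negPn /eqP].
have he : all (fun e => [&& e.1 < 13, e.2 < 13 & ER_adj p (nth (0,0,0)%R vs e.1) (nth (0,0,0)%R vs e.2)]) es.
  have K z := @in_range_small p z hm.
  by rewrite /= /ER_adj /= !K.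
move/allP: he => /(_ _ ein) /and3P [hi hj ha].
rewrite !(nth_map (0,0,0)%R) //.
by apply: Hadj ha.
Qed.
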